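(* For all $\delta,k\in\mathbb N^+$ and $T_{\max}\ge 4$, there is an infinite family of temporal graphs $\{\mathcal G_n\}_{n\in\mathbb N}$ with lifetime $T_{\max}$ such that each $\mathcal G_n$ has $\Theta(n)$ nodes and the minimum number of rounds required by any Discoverer to win the temporal graph discovery game on $\mathcal G_n$ (with parameters $T_{\max},\delta,k$) grows in $\Omega\big(n(T_{\max}-3)/(\delta k)\big)$.
   Context: A temporal graph $\mathcal G=(V,E,\lambda)$ with lifetime $T_{\max}$ consists of a finite undirected static graph $(V,E)$ and a labeling $\lambda:E\to\{1,\dots,T_{\max}\}$; edge $e$ is present only at time $\lambda(e)$. Infection model with parameter $\delta$: a set $S\subseteq V\times[0,T_{\max}]$ of seed infections is given; a seed $(u,t)$ makes $u$ infected at time $t$; otherwise a susceptible node $u$ becomes infected at time $t$ iff some neighbour $v$ infectious at time $t$ has $\lambda(uv)=t$ (with exactly one infector recorded if several exist). A node infected at time $t$ is infectious at times $t+1,\dots,t+\delta$ and resistant afterwards. The infection log records triples $(u,v,t)$ ($u$ infected $v$ at time $t$; seeds as $(u,u,t)$); a log is consistent with $S$ if some infection chain seeded by $S$ produces it. Temporal graph discovery game with parameters $T_{\max},\delta,k$: the Discoverer knows $V$ and $E$; each round it submits at most $k$ seed infections and the Adversary answers with a consistent infection log under some labeling consistent with all previous answers (adaptively chosen). The Discoverer wins when it submits a labeling that matches the Adversary's final labeling consistent with all logs, i.e. effectively iff the labeling is uniquely determined by the logs. *)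

(* Defs.v *)
From mathcomp Require Import all_boot.
Set Implicit Arguments. Unset Strict Implicit. Unset Printing Implicit Defensive.

Definition simple_graph (V : finType) (e : rel V) : Prop :=
  (forall u v, e u v = e v u) /\ (forall u, ~~ e u u).

(* A labeling lambda : E -> {1..Tmax}, represented as a function on pairs of
   nodes; only its values on edges matter (symmetric on edges). *)
Definition valid_labeling (V : finType) (e : rel V) (Tmax : nat)
  (lam : V -> V -> nat) : Prop :=
  forall u v, e u v -> lam u v = lam v u /\ 1 <= lam u v <= Tmax.

(* An infection log: for every node u, either None (never infected) or
   Some (w, t), meaning the triple (w, u, t): w infected u at time t
   (w = u for a seed). *)
Definition infection_log (V : finType) := V -> option (V * nat).

(* A node infected at
   time s is infectious at times s+1 .. s+delta. *)
Definition run (V : finType) (e : rel V) (delta : nat) (lam : V -> V -> nat)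
  (S : seq (V * nat)) (l : infection_log V) : Prop :=
  (forall u w t, l u = Some (w, t) ->
     (w = u /\ (u, t) \in S) \/
     ((u, t) \notin S /\ e w u /\ lam w u = t /\
      exists w' s, l w = Some (w', s) /\ s < t <= s + delta))
  /\
  (forall u t,
     ((u, t) \in S \/
      exists v w' s, e v u /\ l v = Some (w', s) /\ s < t <= s + delta /\
                     lam v u = t) ->
     exists w t', l u = Some (w, t') /\ t' <= t).

Definition history (V : finType) := seq (seq (V * nat) * infection_log V).

Definition consistent_hist (V : finType) (e : rel V) (delta : nat)
  (lam : V -> V -> nat) (h : history V) : Prop :=
  foldr (fun p P => run e delta lam p.1 p.2 /\ P) True h.

Definition determined (V : finType) (e : rel V) (Tmax delta : nat)
  (h : history V) : Prop :=
  forall lam1 lam2,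
    valid_labeling e Tmax lam1 -> valid_labeling e Tmax lam2 ->
    consistent_hist e delta lam1 h -> consistent_hist e delta lam2 h ->
    forall u v, e u v -> lam1 u v = lam2 u v.

Definition valid_query (V : finType) (Tmax k : nat) (S : seq (V * nat)) : bool :=
  (size S <= k) && all (fun p => p.2 <= Tmax) S.

(* [can_win e Tmax delta k r h]: from history h, the Discoverer has a
   strategy guaranteeing a win within r further rounds against every
   adaptive Adversary (which answers with any log consistent with the query
   under some valid labeling consistent with all previous answers). *)
Fixpoint can_win (V : finType) (e : rel V) (Tmax delta k : nat) (r : nat)
  (h : history V) : Prop :=
  match r with
  | 0 => determined e Tmax delta h
  | r'.+1 =>
      determined e Tmax delta h \/
      exists S, valid_query Tmax k S /\
        forall l : infection_log V,
          (exists lam, valid_labeling e Tmax lam /\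
                       consistent_hist e delta lam h /\ run e delta lam S l) ->
          can_win e Tmax delta k r' ((S, l) :: h)
  end.

(* Main.v *)
Require Import Defs.
From mathcomp Require Import all_boot zify.
From Stdlib Require Import FunctionalExtensionality.
Set Implicit Arguments. Unset Strict Implicit. Unset Printing Implicit Defensive.

Definition eG n : rel ('I_n * bool) := fun x y => (x.1 == y.1) && (x.2 != y.2).

Definition mt n Tmax (S : seq (('I_n * bool) * nat)) (x : 'I_n * bool) : nat :=
  foldr minn Tmax.+1 [seq p.2 | p <- S & p.1 == x].

Definition lab n (lam : 'I_n * bool -> 'I_n * bool -> nat) (i : 'I_n) :=
  lam (i, false) (i, true).

Definition inw d a c := (a < c) && (c <= a + d).

Definition simlog n Tmax d (S : seq (('I_n * bool) * nat)) lam : infection_log ('I_n * bool)%type :=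
  fun x =>
  let y := (x.1, ~~ x.2) in
  let a := mt Tmax S x in let b := mt Tmax S y in let c := lab lam x.1 in
  if inw d b c && (c < a) then Some (y, c)
  else if a <= Tmax then Some (x, a) else None.

Lemma mt_le n Tmax S (x : 'I_n * bool) t : (x, t) \in S -> mt Tmax S x <= t.
Proof.
elim: S => //= p S IH; rewrite in_cons => /orP [/eqP <- | /IH].
  by rewrite /mt /= eqxx /= geq_minl.
rewrite /mt /=; case: ifP => //= _ H; by rewrite geq_min H orbT.
Qed.

Lemma mt_mem n Tmax S (x : 'I_n * bool) : mt Tmax S x <= Tmax -> (x, mt Tmax S x) \in S.
Proof.
elim: S => [|p S IH] /=; first by rewrite /mt /= ltnn.
rewrite /mt /=; case: ifP => /= [/eqP hx | _ H]; last by rewrite in_cons IH ?orbT.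
rewrite /minn; case: ltnP => H1 H2.
  by rewrite in_cons -hx -surjective_pairing eqxx.
by rewrite in_cons IH ?orbT.
Qed.

Lemma partner_e n (u v : 'I_n * bool) : eG v u -> v = (u.1, ~~ u.2).
Proof.
case: u v => [i b] [j b'] /andP [/eqP /= -> ]; by case: b; case: b'.
Qed.

Lemma lam_partner n Tmax (lam : 'I_n * bool -> 'I_n * bool -> nat) x :
  valid_labeling (@eG n) Tmax lam ->
  [/\ lam (x.1, ~~ x.2) x = lab lam x.1, lam x (x.1, ~~ x.2) = lab lam x.1
    & 1 <= lab lam x.1 <= Tmax].
Proof.
move=> vl; have [h1 h2] := vl (x.1, false) (x.1, true) ltac:(by rewrite /eG /= eqxx).
case: x h1 h2 => i [|] /= h1 h2; rewrite /lab /=; split => //; lia.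
Qed.

Lemma partnerK n (x : 'I_n * bool) : ((x.1, ~~ x.2).1, ~~ (x.1, ~~ x.2).2) = x.
Proof. by case: x => i b /=; rewrite negbK. Qed.

Lemma sim_run n Tmax d (S : seq (('I_n * bool) * nat)) lam :
  valid_labeling (@eG n) Tmax lam -> all (fun p => p.2 <= Tmax) S ->
  run (@eG n) d lam S (simlog Tmax d S lam).
Proof.
move=> vl allS; split.
- move=> u w t.
  have hu : simlog Tmax d S lam u =
    if inw d (mt Tmax S (u.1, ~~ u.2)) (lab lam u.1) && (lab lam u.1 < mt Tmax S u)
    then Some ((u.1, ~~ u.2), lab lam u.1)
    else if mt Tmax S u <= Tmax then Some (u, mt Tmax S u)
    else None by [].
  have [h1 h2 h3] := lam_partner u vl.
  have hy : simlog Tmax d S lam (u.1, ~~ u.2) =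
    if inw d (mt Tmax S u) (lab lam u.1) && (lab lam u.1 < mt Tmax S (u.1, ~~ u.2))
    then Some (u, lab lam u.1)
    else if mt Tmax S (u.1, ~~ u.2) <= Tmax then Some ((u.1, ~~ u.2), mt Tmax S (u.1, ~~ u.2))
    else None.
    by rewrite /simlog partnerK.
  rewrite hu; move: hy h1 h2 h3.
  set a := mt Tmax S u; set b := mt Tmax S (u.1, ~~ u.2); set c := lab lam u.1.
  move=> hy h1 h2 h3.
  case: ifP => [/andP [/andP [bc cb] ca] [<- <-] | _].
    right; split.
      apply/negP => H; have := mt_le Tmax H; rewrite -/a; lia.
    split; first by rewrite /eG /= eqxx; case: (u.2).
    split; first by [].
    exists (u.1, ~~ u.2), b; split; last by lia.
    rewrite hy.
    have -> : inw d a c && (c < b) = false.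
      by apply/negbTE; rewrite negb_and -leqNgt; apply/orP; right; lia.
    by rewrite ifT //; lia.
  case: ifP => // ha [<- <-]; left; split => //; exact: mt_mem.
- move=> u t; have [h1 h2 h3] := lam_partner u vl.
  have hy : simlog Tmax d S lam (u.1, ~~ u.2) =
    if inw d (mt Tmax S u) (lab lam u.1) && (lab lam u.1 < mt Tmax S (u.1, ~~ u.2))
    then Some (u, lab lam u.1)
    else if mt Tmax S (u.1, ~~ u.2) <= Tmax then Some ((u.1, ~~ u.2), mt Tmax S (u.1, ~~ u.2))
    else None.
    by rewrite /simlog partnerK.
  have hu : simlog Tmax d S lam u =
    if inw d (mt Tmax S (u.1, ~~ u.2)) (lab lam u.1) && (lab lam u.1 < mt Tmax S u)
    then Some ((u.1, ~~ u.2), lab lam u.1)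
    else if mt Tmax S u <= Tmax then Some (u, mt Tmax S u)
    else None by [].
  case => [inS | [v [w' [s [evu [lv [st lvu]]]]]]].
    have := mt_le Tmax inS; have tT : t <= Tmax by move/allP: allS => /(_ _ inS).
    move: hu h3; set a := mt Tmax S u; set b := mt Tmax S (u.1, ~~ u.2); set c := lab lam u.1.
    move=> hu h3 at'; rewrite hu; case: ifP => [/andP [_ H] | _].
      by eexists; eexists; split; first reflexivity; exact: leq_trans (ltnW H) at'.
    by rewrite ifT; [eexists; eexists; split; first reflexivity|exact: leq_trans at' tT].
  move: lv lvu; rewrite (partner_e evu) h1 hy hu => lv lvu; subst t.
  move: lv h3; set a := mt Tmax S u; set b := mt Tmax S (u.1, ~~ u.2); set c := lab lam u.1.
  move=> lv h3.
  move: lv; case: ifP => [/andP [_ H] [_ E] | _]; first by move: st; rewrite -E ltnn.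
  case: ifP => // bT [_ E]; subst s.
  case: ifP => [_ | /negbT]; first by eexists; eexists; split; first reflexivity.
  move: st; rewrite -/c /inw => st; rewrite st /= -leqNgt => ac.
  by rewrite ifT; [eexists; eexists; split; first reflexivity|]; lia.
Qed.

Lemma count_le_add (T : eqType) (P Q1 Q2 : pred T) s :
  (forall x, x \in s -> P x <= Q1 x + Q2 x) -> count P s <= count Q1 s + count Q2 s.
Proof.
elim: s => //= x s IH H.
have := H x (mem_head _ _); have := IH (fun y ys => H y (@mem_behead _ (x :: s) _ ys)); lia.
Qed.

Lemma count_add_le (T : eqType) (P1 P2 Q : pred T) s :
  (forall x, P1 x + P2 x <= Q x) -> count P1 s + count P2 s <= count Q s.
Proof.
move=> H; elim: s => //= x s IH; have := H x; lia.
Qed.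

Lemma bool_le (b b1 b2 : bool) : (b -> b1 || b2) -> b <= b1 + b2.
Proof. by case: b; case: b1; case: b2 => //= /(_ isT). Qed.

Definition cnt Tmax (P : pred nat) := count P (iota 1 Tmax).

Lemma count_inw d a s : uniq s -> count (inw d a) s <= d.
Proof.
move=> us; elim: d => [|d IH].
  have := @count_le_add _ (inw 0 a) pred0 pred0 s.
  rewrite !count_pred0; apply => x _ /=; rewrite leqn0 eqb0 /inw; apply/negP => /andP [h1 h2]; lia.
have := @count_le_add _ (inw d.+1 a) (inw d a) (pred1 (a + d.+1)) s.
rewrite count_uniq_mem // => H; apply: leq_trans (H _) _.
  move=> x _ /=; apply: bool_le; rewrite /inw => /andP [h1 h2].
  case: (leqP x (a + d)) => h3; first by rewrite h1.
  by rewrite andbF /= eqn_leq h2 addnS.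
by rewrite -addn1 leq_add // leq_b1.
Qed.

Lemma cnt_inw0 Tmax d a : Tmax <= a -> cnt Tmax (inw d a) = 0.
Proof.
move=> ha; apply/eqP; rewrite -leqn0.
have := @count_le_add _ (inw d a) pred0 pred0 (iota 1 Tmax).
rewrite !count_pred0; apply => x; rewrite mem_iota /inw /=; lia.
Qed.

Lemma cnt_inw Tmax d a : cnt Tmax (inw d a) <= d * (a <= Tmax).
Proof.
case: (leqP a Tmax) => h.
  by rewrite muln1; apply: count_inw; exact: iota_uniq.
by rewrite cnt_inw0 // ltnW.
Qed.

Lemma mt_count n Tmax S (x : 'I_n * bool) :
  (mt Tmax S x <= Tmax) <= count (fun p => p.1 == x) S.
Proof.
case h: (mt Tmax S x <= Tmax) => //=; have H := mt_mem h; rewrite -has_count; apply/hasP.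
by exists (x, mt Tmax S x).
Qed.

Definition Ain n Tmax d (S : seq (('I_n * bool) * nat)) (i : 'I_n) : pred nat :=
  fun c => inw d (mt Tmax S (i, false)) c || inw d (mt Tmax S (i, true)) c.

Lemma cnt_Ain n Tmax d S (i : 'I_n) :
  cnt Tmax (Ain Tmax d S i) <= d * count (fun p => p.1.1 == i) S.
Proof.
have h1 := @count_le_add _ (Ain Tmax d S i) (inw d (mt Tmax S (i, false)))
   (inw d (mt Tmax S (i, true))) (iota 1 Tmax).
have h2 := @count_add_le _ (fun p => p.1 == (i, false)) (fun p => p.1 == (i, true))
   (fun p => p.1.1 == i) S.
have h3 := cnt_inw Tmax d (mt Tmax S (i, false)).
have h4 := cnt_inw Tmax d (mt Tmax S (i, true)).
have h5 := mt_count Tmax S (i, false).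
have h6 := mt_count Tmax S (i, true).
rewrite /cnt in h3 h4 *.
have {h1} h1 : count (Ain Tmax d S i) (iota 1 Tmax) <=
   count (inw d (mt Tmax S (i, false))) (iota 1 Tmax) +
   count (inw d (mt Tmax S (i, true))) (iota 1 Tmax).
  by apply: h1 => x _; rewrite /Ain; case: (inw _ _ x); case: (inw _ _ x).
have {h2} h2 : count (fun p => p.1 == (i, false)) S + count (fun p => p.1 == (i, true)) S
   <= count (fun p => p.1.1 == i) S.
  apply: h2 => -[[j b] t] /=; rewrite !xpair_eqE; case: b; case: (j == i); by rewrite ?eqxx.
have : d * (mt Tmax S (i, false) <= Tmax) <= d * count (fun p => p.1 == (i, false)) S by rewrite leq_mul2l h5 orbT.
have : d * (mt Tmax S (i, true) <= Tmax) <= d * count (fun p => p.1 == (i, true)) S by rewrite leq_mul2l h6 orbT.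
have : d * count (fun p => p.1 == (i, false)) S + d * count (fun p => p.1 == (i, true)) S
   <= d * count (fun p => p.1.1 == i) S by rewrite -mulnDr leq_mul2l h2 orbT.
lia.
Qed.

Definition pick Tmax (P : pred nat) := nth 0 (filter P (iota 1 Tmax)) 0.

Lemma pick_spec Tmax P : 0 < cnt Tmax P -> P (pick Tmax P) /\ 0 < pick Tmax P <= Tmax.
Proof.
move=> h; have : pick Tmax P \in filter P (iota 1 Tmax).
  by apply: mem_nth; rewrite size_filter.
rewrite mem_filter mem_iota => /andP [-> H]; split => //; lia.
Qed.

Definition lamf n (f : 'I_n -> nat) : 'I_n * bool -> 'I_n * bool -> nat :=
  fun x _ => f x.1.

Lemma valid_lamf n Tmax (f : 'I_n -> nat) :
  (forall i, 0 < f i <= Tmax) -> valid_labeling (@eG n) Tmax (lamf f).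
Proof.
move=> hf u v /andP [/eqP huv _]; rewrite /lamf huv; split => //; exact: hf.
Qed.

Definition Inv n Tmax d (h : history ('I_n * bool)%type) (R : 'I_n -> pred nat) :=
  (forall i, 0 < cnt Tmax (R i)) /\
  forall lam, valid_labeling (@eG n) Tmax lam -> (forall i, R i (lab lam i)) ->
    consistent_hist (@eG n) d lam h.

Lemma not_det n Tmax d h R :
  @Inv n Tmax d h R -> n < \sum_(i < n) cnt Tmax (R i) -> ~ determined (@eG n) Tmax d h.
Proof.
move=> [cR cons] hs det.
have [i hi] : exists i, 1 < cnt Tmax (R i).
  case: (boolP [exists i, 1 < cnt Tmax (R i)]) => [/existsP [i hi] | /existsPn H].
    by exists i.
  move: hs; rewrite -[n in n < _]card_ord -sum1_card ltnNge leq_sum //.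
  by move=> j _; rewrite leqNgt H.
set c1 := pick Tmax (R i).
set P2 := fun c => R i c && (c != c1).
have hP2 : 0 < cnt Tmax P2.
  have := @count_le_add _ (R i) P2 (pred1 c1) (iota 1 Tmax).
  rewrite count_uniq_mem ?iota_uniq //.
  move=> H; have {H} H : cnt Tmax (R i) <= cnt Tmax P2 + (c1 \in iota 1 Tmax).
    apply: H => x _; apply: bool_le => hx; rewrite /P2 hx /=; by case: (x == c1).
  have := leq_b1 (c1 \in iota 1 Tmax); lia.
set c2 := pick Tmax P2.
have [h1 h1'] := pick_spec (cR i).
have [h2 h2'] := pick_spec hP2.
move: h2; rewrite /P2 => /andP [h2 h2n].
pose f1 j := if j == i then c1 else pick Tmax (R j).
pose f2 j := if j == i then c2 else pick Tmax (R j).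
have v1 : valid_labeling (@eG n) Tmax (lamf f1).
  apply: valid_lamf => j; rewrite /f1; case: eqP => // _; by have [] := pick_spec (cR j).
have v2 : valid_labeling (@eG n) Tmax (lamf f2).
  apply: valid_lamf => j; rewrite /f2; case: eqP => // _; by have [] := pick_spec (cR j).
have k1 : consistent_hist (@eG n) d (lamf f1) h.
  apply: cons v1 _ => j; rewrite /lab /lamf /f1 /=; case: eqP => [-> //|_].
  by have [] := pick_spec (cR j).
have k2 : consistent_hist (@eG n) d (lamf f2) h.
  apply: cons v2 _ => j; rewrite /lab /lamf /f2 /=; case: eqP => [-> //|_].
  by have [] := pick_spec (cR j).
have := det _ _ v1 v2 k1 k2 (i, false) (i, true).
rewrite /lamf /f1 /f2 /= eqxx => /(_ ltac:(by rewrite /eG /= eqxx)) E.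
by move: h2n; rewrite -/c2 -E eqxx.
Qed.

Lemma sim_noA n Tmax d S lam (x : 'I_n * bool) :
  ~~ Ain Tmax d S x.1 (lab lam x.1) ->
  simlog Tmax d S lam x = if mt Tmax S x <= Tmax then Some (x, mt Tmax S x) else None.
Proof.
rewrite /simlog /Ain negb_or => /andP [h1 h2].
by case: x h1 h2 => i [] /= h1 h2; rewrite ?(negbTE h1) ?(negbTE h2).
Qed.

Lemma sum_count n (S : seq (('I_n * bool) * nat)) :
  \sum_(i < n) count (fun p => p.1.1 == i) S = size S.
Proof.
elim: S => [|q S IH] /=; first by rewrite big1.
rewrite big_split /= IH (bigD1 q.1.1) //= eqxx big1 //.
by move=> j /negbTE; rewrite eq_sym => ->.
Qed.

Lemma step n Tmax d k h R (S : seq (('I_n * bool) * nat)) :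
  @Inv n Tmax d h R -> valid_query Tmax k S ->
  exists l, (exists lam, valid_labeling (@eG n) Tmax lam /\
                         consistent_hist (@eG n) d lam h /\ run (@eG n) d lam S l) /\
  exists R', @Inv n Tmax d ((S, l) :: h) R' /\
    \sum_(i < n) cnt Tmax (R i) <= \sum_(i < n) cnt Tmax (R' i) + d * size S.
Proof.
move=> [cR cons] /andP [_ allS].
pose R' := fun i c => if has (fun c => R i c && ~~ Ain Tmax d S i c) (iota 1 Tmax)
   then R i c && ~~ Ain Tmax d S i c else c == pick Tmax (R i).
have cR' : forall i, 0 < cnt Tmax (R' i).
  move=> i; rewrite /cnt /R'.
  case hh : (has (fun c => R i c && ~~ Ain Tmax d S i c) (iota 1 Tmax)); first by rewrite -has_count.
  have [_ hp] := pick_spec (cR i).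
  have := @count_uniq_mem _ (iota 1 Tmax) (pick Tmax (R i)) (iota_uniq _ _).
  rewrite mem_iota => ->; lia.
have sub : forall i c, R' i c -> R i c.
  move=> i c; rewrite /R' /=; case: ifP => _; first by case/andP.
  by move/eqP => ->; have [] := pick_spec (cR i).
pose f0 i := pick Tmax (R' i).
have v0 : valid_labeling (@eG n) Tmax (lamf f0).
  by apply: valid_lamf => i; have [] := pick_spec (cR' i).
have r0 : forall i, R' i (lab (lamf f0) i).
  by move=> i; have [] := pick_spec (cR' i).
exists (simlog Tmax d S (lamf f0)); split.
  exists (lamf f0); split => //; split; last exact: sim_run.
  by apply: cons => // i; apply: sub.
exists R'; split.
  split => // lam vl hl /=; split; last by apply: cons => // i; apply: sub.
  have -> : simlog Tmax d S (lamf f0) = simlog Tmax d S lam; last exact: sim_run.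
  apply: functional_extensionality => x.
  have := r0 x.1; have := hl x.1; rewrite /R' /=; case: ifP => _.
    by move=> /andP [_ a1] /andP [_ a2]; rewrite !sim_noA.
  by move=> /eqP a1 /eqP a2; rewrite /simlog a1 a2.
rewrite -sum_count big_distrr -big_split /=; apply: leq_sum => i _.
have hA := cnt_Ain Tmax d S i.
case hh : (has (fun c => R i c && ~~ Ain Tmax d S i c) (iota 1 Tmax)).
  have -> : cnt Tmax (R' i) = cnt Tmax (fun c => R i c && ~~ Ain Tmax d S i c).
    by rewrite /cnt /R' hh.
  have := @count_le_add _ (R i) (fun c => R i c && ~~ Ain Tmax d S i c) (Ain Tmax d S i) (iota 1 Tmax).
  move=> H; have {H} H : cnt Tmax (R i) <= cnt Tmax (fun c => R i c && ~~ Ain Tmax d S i c)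
     + cnt Tmax (Ain Tmax d S i).
    apply: H => x _; apply: bool_le => hx; rewrite hx /=; by case: (Ain _ _ _ _ x).
  by apply: leq_trans H _; rewrite leq_add2l.
have -> : cnt Tmax (R' i) = cnt Tmax (pred1 (pick Tmax (R i))).
  by rewrite /cnt /R' hh.
have := @count_le_add _ (R i) (pred1 (pick Tmax (R i))) (Ain Tmax d S i) (iota 1 Tmax).
move=> H; have {H} H : cnt Tmax (R i) <= cnt Tmax (pred1 (pick Tmax (R i)))
     + cnt Tmax (Ain Tmax d S i).
  apply: H => x hx; apply: bool_le => hR; apply/orP; right.
  move/hasPn: hh => /(_ x hx); rewrite hR /=; exact: negbNE.
by apply: leq_trans H _; rewrite leq_add2l.
Qed.

Lemma noWin n Tmax d k r : forall h R, @Inv n Tmax d h R ->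
  n + r * (d * k) < \sum_(i < n) cnt Tmax (R i) -> ~ can_win (@eG n) Tmax d k r h.
Proof.
elim: r => [|r IH] h R inv hs /=.
  by apply: not_det inv _; rewrite mul0n addn0 in hs.
case => [det | [S [vq H]]].
  by apply: not_det inv _ det; lia.
have [l [adm [R' [inv' hs']]]] := step inv vq.
have hk : d * size S <= d * k by rewrite leq_mul2l; case/andP: vq => -> _; rewrite orbT.
apply: IH inv' _ (H l adm).
move: hs hs'; set s1 := \sum_(i < n) cnt Tmax (R i); set s2 := \sum_(i < n) cnt Tmax (R' i).
rewrite mulSn; lia.
Qed.

Theorem mainTheorem2 :
  exists C : nat, 0 < C /\
  forall delta k Tmax : nat, 0 < delta -> 0 < k -> 4 <= Tmax ->
  exists (V : nat -> finType) (e : forall n, rel (V n)),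
    (forall n, simple_graph (e n)) /\
    exists N : nat, forall n : nat, N <= n ->
      n <= C * #|V n| /\ #|V n| <= C * n /\
      forall r : nat, can_win (e n) Tmax delta k r [::] ->
        n * (Tmax - 3) <= C * (r * delta * k).
Proof.
exists 2; split => // d k Tmax hd hk hT.
exists (fun n : nat => (('I_n * bool)%type : finType)).
exists (fun n => @eG n); split.
  move=> n; split => [u v|u]; rewrite /eG.
    by rewrite eq_sym [u.2 == _]eq_sym.
  by rewrite !eqxx.
exists 0 => n _.
rewrite card_prod card_ord card_bool; split; first lia.
split; first lia.
move=> r hw.
case: (leqP (n * (Tmax - 3)) (2 * (r * d * k))) => // hlt; exfalso.
have inv : @Inv n Tmax d [::] (fun _ _ => true).
  split => // i; rewrite /cnt count_predT size_iota; lia.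
apply: (noWin inv _ hw).
rewrite /cnt (eq_bigr (fun _ => Tmax)); last by move=> i _; rewrite count_predT size_iota.
rewrite sum_nat_const card_ord.
nia.
Qed.
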